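(* Let $(H,\Delta,\Delta')$ be a Hopf brace over a field $k$, with first antipode $S$. Then for every $h\in H$, $$S(h_1)_{1'}\,h_2\otimes S(h_1)_{2'}=S(h_1)\,h_{21'}\otimes S(h_{22'}).$$
   Context: All objects are over a field $k$. A Hopf brace $(H,\Delta,\Delta')$ consists of an algebra $(H,m,1)$ together with two Hopf algebra structures $(H,m,1,\Delta,\varepsilon,S)$ and $(H,m,1,\Delta',\epsilon,T)$ on the same algebra, satisfying for all $h\in H$ $$h_{1'}\otimes h_{2'1}\otimes h_{2'2}=h_{11'}\,S(h_2)\,h_{31'}\otimes h_{12'}\otimes h_{32'}.$$ Sweedler notation: $\Delta(h)=h_1\otimes h_2$, $\Delta'(h)=h_{1'}\otimes h_{2'}$ (summation omitted); iterated indices such as $h_{21'}\otimes h_{22'}$ mean: apply $\Delta$ to $h$, then $\Delta'$ to the second tensor factor $h_2$; $S(h_1)_{1'}\otimes S(h_1)_{2'}$ denotes $\Delta'(S(h_1))$. *)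

(* Defs.v *)
From HB Require Import structures.
From mathcomp Require Import all_boot all_order all_algebra.
Set Implicit Arguments. Unset Strict Implicit. Unset Printing Implicit Defensive.
Import GRing.Theory.
Local Open Scope ring_scope.

(* Elements of H (x) H (resp. H (x) H (x) H) are represented by finite
   formal sums of pure tensors, i.e. sequences of pairs (triples).
   Two such representatives denote the same element of the tensor product
   iff they agree on every bilinear (trilinear) form H x H -> k
   (over a field, linear functionals separate points of H (x) H). *)
Section Tensors.
Variables (k : fieldType) (H : algType k).

Definition bilinear_form (B : H -> H -> k) : Prop :=
  forall (a : k) (x y z : H),
    B (a *: x + y) z = a * B x z + B y z /\
    B z (a *: x + y) = a * B z x + B z y.

Definition trilinear_form (B : H -> H -> H -> k) : Prop :=
  forall (a : k) (x y u v : H),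
    [/\ B (a *: x + y) u v = a * B x u v + B y u v,
        B u (a *: x + y) v = a * B u x v + B u y v &
        B u v (a *: x + y) = a * B u v x + B u v y].

Definition teq2 (s t : seq (H * H)) : Prop :=
  forall B, bilinear_form B ->
    \sum_(p <- s) B p.1 p.2 = \sum_(p <- t) B p.1 p.2.

Definition teq3 (s t : seq (H * H * H)) : Prop :=
  forall B, trilinear_form B ->
    \sum_(p <- s) B p.1.1 p.1.2 p.2 = \sum_(p <- t) B p.1.1 p.1.2 p.2.

(* (H, m, 1, cop, cou, anti) is a Hopf algebra over k, with cop h
   representing Delta(h) = sum h_1 (x) h_2. *)
Definition is_hopf (cop : H -> seq (H * H)) (cou : H -> k) (anti : H -> H)
  : Prop :=
      (forall (a : k) (x y : H),
         teq2 (cop (a *: x + y)) ([seq (a *: p.1, p.2) | p <- cop x] ++ cop y)) /\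
      (forall h : H,
         teq3 [seq (q.1, q.2, p.2) | p <- cop h, q <- cop p.1]
              [seq (p.1, q.1, q.2) | p <- cop h, q <- cop p.2]) /\
      (forall (a : k) (x y : H), cou (a *: x + y) = a * cou x + cou y) /\
      (forall h : H, \sum_(p <- cop h) cou p.1 *: p.2 = h
                  /\ \sum_(p <- cop h) cou p.2 *: p.1 = h) /\
      (forall x y : H,
         teq2 (cop (x * y)) [seq (p.1 * q.1, p.2 * q.2) | p <- cop x, q <- cop y])
        /\ teq2 (cop 1) [:: (1, 1)] /\
      (forall x y : H, cou (x * y) = cou x * cou y) /\ cou 1 = 1 /\
      (forall (a : k) (x y : H), anti (a *: x + y) = a *: anti x + anti y)
      /\ (forall h : H, \sum_(p <- cop h) anti p.1 * p.2 = cou h *: 1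
                     /\ \sum_(p <- cop h) p.1 * anti p.2 = cou h *: 1).

(* Hopf brace compatibility:
   h_1' (x) h_2'1 (x) h_2'2 = h_11' S(h_2) h_31' (x) h_12' (x) h_32',
   where h_1 (x) h_2 (x) h_3 = (Delta (x) id) Delta h. *)
Definition brace_compat (cop cop' : H -> seq (H * H)) (anti : H -> H) : Prop :=
  forall h : H,
    teq3 [seq (p.1, q.1, q.2) | p <- cop' h, q <- cop p.2]
         (flatten [seq [seq (a.1 * anti r.2 * b.1, a.2, b.2)
                          | a <- cop' r.1, b <- cop' p.2]
                   | p <- cop h, r <- cop p.1]).

Definition is_hopf_brace (cop : H -> seq (H * H)) (cou : H -> k) (anti : H -> H)
  (cop' : H -> seq (H * H)) (cou' : H -> k) (anti' : H -> H) : Prop :=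
  [/\ is_hopf cop cou anti, is_hopf cop' cou' anti' & brace_compat cop cop' anti].

End Tensors.

(* Main.v *)
Require Import Defs.
From HB Require Import structures.
From mathcomp Require Import ring.
From mathcomp Require Import all_boot all_order all_algebra.
Set Implicit Arguments. Unset Strict Implicit. Unset Printing Implicit Defensive.
Import GRing.Theory.
Local Open Scope ring_scope.

Section Aux.
Variables (k : fieldType) (H : algType k).

Definition lin (f : H -> k) := forall (a : k) (x y : H), f (a *: x + y) = a * f x + f y.
Definition hlin (g : H -> H) := forall (a : k) (x y : H), g (a *: x + y) = a *: g x + g y.

Lemma lin0 f : lin f -> f 0 = 0.
Proof. move=> hf; have := hf 1 0 0; rewrite scale1r addr0 mul1r => e.
by apply/(addrI (f 0)); rewrite addr0 -e. Qed.

Lemma linD f : lin f -> forall x y, f (x + y) = f x + f y.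
Proof. by move=> hf x y; have := hf 1 x y; rewrite scale1r mul1r. Qed.

Lemma linZ f : lin f -> forall a x, f (a *: x) = a * f x.
Proof. by move=> hf a x; rewrite -[a *: x]addr0 hf lin0 // addr0. Qed.

Lemma lin_sum f (I : Type) (s : seq I) (F : I -> H) : lin f ->
  f (\sum_(i <- s) F i) = \sum_(i <- s) f (F i).
Proof.
move=> hf; elim: s => [|i s IH]; first by rewrite !big_nil lin0.
by rewrite !big_cons linD // IH.
Qed.

Lemma lin_sumF (I : Type) (s : seq I) (F : I -> H -> k) :
  (forall i, lin (F i)) -> lin (fun x => \sum_(i <- s) F i x).
Proof.
move=> hF a x y; rewrite mulr_sumr -big_split /=.
by apply: eq_bigr => i _; rewrite hF.
Qed.

Lemma lin_comp f g : lin f -> hlin g -> lin (fun x => f (g x)).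
Proof. by move=> hf hg a x y; rewrite hg hf. Qed.

Lemma lin_mulr f c : lin f -> lin (fun x => f x * c).
Proof. by move=> hf a x y; rewrite hf mulrDl mulrA. Qed.

Lemma lin_mull f c : lin f -> lin (fun x => c * f x).
Proof. by move=> hf a x y; rewrite hf mulrDr mulrCA. Qed.

Lemma hlin_mull c : hlin (fun x => c * x).
Proof. by move=> a x y; rewrite mulrDr scalerAr. Qed.

Lemma hlin_mulr c : hlin (fun x => x * c).
Proof. by move=> a x y; rewrite mulrDl scalerAl. Qed.

Lemma hlin_comp g1 g2 : hlin g1 -> hlin g2 -> hlin (fun x => g1 (g2 x)).
Proof. by move=> h1 h2 a x y; rewrite h2 h1. Qed.

Lemma bilP (B : H -> H -> k) :
  (forall z, lin (B^~ z)) -> (forall z, lin (B z)) -> bilinear_form B.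
Proof. by move=> h1 h2 a x y z; split; [apply: h1|apply: h2]. Qed.

Lemma bil1 B : bilinear_form B -> forall z, lin (B^~ z).
Proof. by move=> hB z a x y; case: (hB a x y z). Qed.
Lemma bil2 B : bilinear_form B -> forall z, lin (B z).
Proof. by move=> hB z a x y; case: (hB a x y z). Qed.

Lemma trilP (B : H -> H -> H -> k) :
  (forall v w, lin (fun u => B u v w)) -> (forall u w, lin (fun v => B u v w)) ->
  (forall u v, lin (fun w => B u v w)) -> trilinear_form B.
Proof. by move=> h1 h2 h3 a x y u v; split; [apply: h1|apply: h2|apply: h3]. Qed.

Definition coplin (f : H -> seq (H * H)) :=
  forall (a : k) (x y : H),
    teq2 (f (a *: x + y)) ([seq (a *: p.1, p.2) | p <- f x] ++ f y).

Lemma copL f : coplin f -> forall B, bilinear_form B ->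
  lin (fun x => \sum_(p <- f x) B p.1 p.2).
Proof.
move=> hf B hB a x y; rewrite (hf a x y B hB) big_cat big_map /= mulr_sumr.
congr (_ + _); apply: eq_bigr => p _; by rewrite (linZ (bil1 hB _)).
Qed.

End Aux.

Section Main.
Variables (k : fieldType) (H : algType k).
Variables (cop : H -> seq (H * H)) (cou : H -> k) (S : H -> H)
  (cop' : H -> seq (H * H)) (cou' : H -> k) (T : H -> H).
Hypothesis hb : is_hopf_brace cop cou S cop' cou' T.

Lemma cL : coplin cop. Proof. by case: hb => [[? _] _ _]. Qed.
Lemma c'L : coplin cop'. Proof. by case: hb => [_ [? _] _]. Qed.
Lemma cA h : teq3 [seq (q.1, q.2, p.2) | p <- cop h, q <- cop p.1]
              [seq (p.1, q.1, q.2) | p <- cop h, q <- cop p.2].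
Proof. by case: hb => [[_ [? _]] _ _]. Qed.
Lemma eL : lin cou. Proof. by case: hb => [[_ [_ [? _]]] _ _]. Qed.
Lemma e'L : lin cou'. Proof. by case: hb => [_ [_ [_ [? _]]] _]. Qed.
Lemma eC h : \sum_(p <- cop h) cou p.1 *: p.2 = h /\ \sum_(p <- cop h) cou p.2 *: p.1 = h.
Proof. by case: hb => [[_ [_ [_ [? _]]]] _ _]. Qed.
Lemma e'C h : \sum_(p <- cop' h) cou' p.1 *: p.2 = h /\ \sum_(p <- cop' h) cou' p.2 *: p.1 = h.
Proof. by case: hb => [_ [_ [_ [_ [? _]]]] _]. Qed.
Lemma c'M x y : teq2 (cop' (x * y)) [seq (p.1 * q.1, p.2 * q.2) | p <- cop' x, q <- cop' y].
Proof. by case: hb => [_ [_ [_ [_ [_ [? _]]]]] _]. Qed.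
Lemma c'1 : teq2 (cop' 1) [:: (1, 1)].
Proof. by case: hb => [_ [_ [_ [_ [_ [_ [? _]]]]]] _]. Qed.
Lemma e'M x y : cou' (x * y) = cou' x * cou' y.
Proof. by case: hb => [_ [_ [_ [_ [_ [_ [_ [? _]]]]]]] _]. Qed.
Lemma e'1 : cou' 1 = 1.
Proof. by case: hb => [_ [_ [_ [_ [_ [_ [_ [_ [? _]]]]]]]] _]. Qed.
Lemma SL : hlin S. Proof. by case: hb => [[_ [_ [_ [_ [_ [_ [_ [_ [? _]]]]]]]]] _ _]. Qed.
Lemma SA h : \sum_(p <- cop h) S p.1 * p.2 = cou h *: 1 /\ \sum_(p <- cop h) p.1 * S p.2 = cou h *: 1.
Proof. by case: hb => [[_ [_ [_ [_ [_ [_ [_ [_ [_ ?]]]]]]]]] _ _]. Qed.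
Lemma comp h : teq3 [seq (p.1, q.1, q.2) | p <- cop' h, q <- cop p.2]
         (flatten [seq [seq (a.1 * S r.2 * b.1, a.2, b.2)
                          | a <- cop' r.1, b <- cop' p.2]
                   | p <- cop h, r <- cop p.1]).
Proof. by case: hb. Qed.

Lemma counit1 f x : lin f -> \sum_(p <- cop x) cou p.1 * f p.2 = f x.
Proof. move=> hf; rewrite -{2}((eC x).1) lin_sum //; apply: eq_bigr => p _; by rewrite linZ. Qed.
Lemma counit2 f x : lin f -> \sum_(p <- cop x) cou p.2 * f p.1 = f x.
Proof. move=> hf; rewrite -{2}((eC x).2) lin_sum //; apply: eq_bigr => p _; by rewrite linZ. Qed.
Lemma counit1' f x : lin f -> \sum_(p <- cop' x) cou' p.1 * f p.2 = f x.
Proof. move=> hf; rewrite -{2}((e'C x).1) lin_sum //; apply: eq_bigr => p _; by rewrite linZ. Qed.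
Lemma counit2' f x : lin f -> \sum_(p <- cop' x) cou' p.2 * f p.1 = f x.
Proof. move=> hf; rewrite -{2}((e'C x).2) lin_sum //; apply: eq_bigr => p _; by rewrite linZ. Qed.

Lemma antip1 f x : lin f -> \sum_(p <- cop x) f (S p.1 * p.2) = cou x * f 1.
Proof. by move=> hf; rewrite -lin_sum // (SA x).1 linZ. Qed.
Lemma antip2 f x : lin f -> \sum_(p <- cop x) f (p.1 * S p.2) = cou x * f 1.
Proof. by move=> hf; rewrite -lin_sum // (SA x).2 linZ. Qed.

Lemma compatE h F : trilinear_form F ->
  \sum_(p <- cop' h) \sum_(q <- cop p.2) F p.1 q.1 q.2 =
  \sum_(p <- cop h) \sum_(r <- cop p.1) \sum_(a <- cop' r.1) \sum_(b <- cop' p.2)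
     F (a.1 * S r.2 * b.1) a.2 b.2.
Proof.
move=> hF; have := comp h hF; rewrite big_allpairs_dep big_flatten /= big_allpairs_dep => ->.
apply: eq_bigr => p _; apply: eq_bigr => r _; by rewrite big_allpairs_dep.
Qed.

Lemma coassocE h F : trilinear_form F ->
  \sum_(p <- cop h) \sum_(q <- cop p.1) F q.1 q.2 p.2 =
  \sum_(p <- cop h) \sum_(q <- cop p.2) F p.1 q.1 q.2.
Proof. by move=> hF; have := cA h hF; rewrite !big_allpairs_dep. Qed.

Lemma c'ME x y B : bilinear_form B ->
  \sum_(d <- cop' (x * y)) B d.1 d.2 =
  \sum_(p <- cop' x) \sum_(q <- cop' y) B (p.1 * q.1) (p.2 * q.2).
Proof. by move=> hB; rewrite (c'M x y hB) big_allpairs_dep. Qed.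

Lemma c'1E B : bilinear_form B -> \sum_(d <- cop' 1) B d.1 d.2 = B 1 1.
Proof. by move=> hB; rewrite (c'1 hB) big_seq1. Qed.

Lemma cou_S h : cou h = cou' (S h).
Proof.
have tri : trilinear_form (fun u v w => cou' u * cou v * cou w).
  apply: trilP => *; [apply/lin_mulr/lin_mulr/e'L | apply/lin_mulr/lin_mull/eL | apply/lin_mull/eL].
have := compatE h tri.
have -> : \sum_(p <- cop' h) \sum_(q <- cop p.2) cou' p.1 * cou q.1 * cou q.2 = cou h.
  rewrite -[RHS](counit1' _ eL); apply: eq_bigr => p _.
  rewrite -(counit1 _ eL) mulr_sumr; apply: eq_bigr => q _; by rewrite mulrA.
move=> ->.
transitivity (\sum_(p <- cop h) \sum_(r <- cop p.1) cou r.1 * cou' (S r.2) * cou p.2).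
  apply: eq_bigr => p _; apply: eq_bigr => r _.
  rewrite -(counit1' _ eL) -[in RHS](counit1' _ eL) !mulr_suml.
  apply: eq_bigr => a _; rewrite mulr_sumr; apply: eq_bigr => b _.
  rewrite !e'M; ring.
transitivity (\sum_(p <- cop h) cou' (S p.1) * cou p.2).
  apply: eq_bigr => p _; rewrite -mulr_suml (counit1 (f := fun x => cou' (S x))) //.
  exact: lin_comp e'L SL.
rewrite -(counit2 (f := fun x => cou' (S x))); last exact: lin_comp e'L SL.
by apply: eq_bigr => p _; rewrite mulrC.
Qed.

Lemma eps_eq h : cou' h = cou h.
Proof.
rewrite -{1}((eC h).1) lin_sum; last exact: e'L.
transitivity (\sum_(p <- cop h) cou' (S p.1 * p.2)).
  by apply: eq_bigr => p _; rewrite (linZ e'L) cou_S e'M.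
by rewrite antip1 ?e'1 ?mulr1 //; exact: e'L.
Qed.

Lemma phi_id x : \sum_(p <- cop' x) cou p.2 *: p.1 = x.
Proof. rewrite -[RHS]((e'C x).2); apply: eq_bigr => p _; by rewrite eps_eq. Qed.


Lemma lin_G1 (G : H -> H -> k) g z : bilinear_form G -> hlin g -> lin (fun x => G (g x) z).
Proof. by move=> hG hg; apply: (lin_comp (f := G^~ z)) => //; apply: bil1. Qed.
Lemma lin_G2 (G : H -> H -> k) g z : bilinear_form G -> hlin g -> lin (fun x => G z (g x)).
Proof. by move=> hG hg; apply: (lin_comp (f := G z)) => //; apply: bil2. Qed.
Lemma hlin_id : hlin (fun x : H => x). Proof. by []. Qed.

Definition Rs (y : H) (G : H -> H -> k) :=
  \sum_(p <- cop y) \sum_(b <- cop' p.2) G (S p.1 * b.1) (S b.2).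

Lemma Rs_ext y G1 G2 : (forall u v, G1 u v = G2 u v) -> Rs y G1 = Rs y G2.
Proof. by move=> e; apply: eq_bigr => p _; apply: eq_bigr => b _. Qed.

Lemma Rs_lin G : bilinear_form G -> lin (fun y => Rs y G).
Proof.
move=> hG; apply: (copL cL (B := fun x y => \sum_(b <- cop' y) G (S x * b.1) (S b.2))).
apply: bilP => z.
  apply: lin_sumF => b; apply: (lin_G1 (g := fun x => S x * b.1)) => //.
  exact: hlin_comp (hlin_mulr _) SL.
apply: (copL c'L (B := fun u v => G (S z * u) (S v))).
apply: bilP => w; [exact: (lin_G1 (g := fun u => S z * u)) (hlin_mull _)
                   | exact: (lin_G2 (g := S)) SL].
Qed.

Lemma lemI x G : bilinear_form G ->
  \sum_(p <- cop x) \sum_(a <- cop' p.1) Rs p.2 (fun u v => G (a.1 * u) (a.2 * v)) = G x 1.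
Proof.
move=> hG.
pose F := fun u v w => \sum_(a <- cop' u) \sum_(b <- cop' w)
             G (a.1 * (S v * b.1)) (a.2 * S b.2).
have triF : trilinear_form F.
  apply: trilP.
  - move=> v w; apply: (copL c'L (B := fun y1 y2 => \sum_(b <- cop' w)
             G (y1 * (S v * b.1)) (y2 * S b.2))).
    apply: bilP => z; apply: lin_sumF => b.
      exact: (lin_G1 (g := fun y => y * (S v * b.1))) (hlin_mulr _).
    exact: (lin_G2 (g := fun y => y * S b.2)) (hlin_mulr _).
  - move=> u w; apply: lin_sumF => a; apply: lin_sumF => b.
    apply: (lin_G1 (g := fun v => a.1 * (S v * b.1))) => //.
    exact: hlin_comp (hlin_mull _) (hlin_comp (hlin_mulr _) SL).
  - move=> u v; apply: lin_sumF => a.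
    apply: (copL c'L (B := fun y1 y2 => G (a.1 * (S v * y1)) (a.2 * S y2))).
    apply: bilP => z.
      exact: (lin_G1 (g := fun y => a.1 * (S v * y))) (hlin_comp (hlin_mull _) (hlin_mull _)).
    exact: (lin_G2 (g := fun y => a.2 * S y)) (hlin_comp (hlin_mull _) SL).
transitivity (\sum_(p <- cop x) \sum_(q <- cop p.2) F p.1 q.1 q.2).
  apply: eq_bigr => p _; rewrite /Rs /F exchange_big /=.
  by apply: eq_bigr => q _; apply: eq_bigr => a _.
rewrite -coassocE // /F.
have triG : trilinear_form (fun u v w => G u (v * S w)).
  apply: trilP => *.
  - exact: (lin_G1 (g := fun u => u)) hlin_id.
  - exact: (lin_G2 (g := fun v => v * S _)) (hlin_mulr _).
  - exact: (lin_G2 (g := fun w => _ * S w)) (hlin_comp (hlin_mull _) SL).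
transitivity (\sum_(p <- cop x) \sum_(r <- cop p.1) \sum_(a <- cop' r.1) \sum_(b <- cop' p.2)
     (fun u v w => G u (v * S w)) (a.1 * S r.2 * b.1) a.2 b.2).
  apply: eq_bigr => p _; apply: eq_bigr => r _; apply: eq_bigr => a _.
  by apply: eq_bigr => b _; rewrite /= !mulrA.
rewrite -(compatE x triG) /=.
transitivity (\sum_(p <- cop' x) cou p.2 * G p.1 1).
  apply: eq_bigr => p _; rewrite (antip2 (f := G p.1)) //; exact: bil2.
transitivity (G (\sum_(p <- cop' x) cou p.2 *: p.1) 1); last by rewrite phi_id.
rewrite (lin_sum (f := G^~ 1)); last exact: bil1.
by apply: eq_bigr => p _; rewrite /= (linZ (bil1 hG _)).
Qed.


Lemma Rs_bil w (G : H -> H -> k) : bilinear_form G ->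
  bilinear_form (fun s t => Rs w (fun x y => G (s * x) (t * y))).
Proof.
move=> hG; apply: bilP => z; apply: lin_sumF => q; apply: lin_sumF => b.
  exact: (lin_G1 (g := fun s => s * (S q.1 * b.1))) (hlin_mulr _).
exact: (lin_G2 (g := fun t => t * S b.2)) (hlin_mulr _).
Qed.

Lemma mainE h G : bilinear_form G ->
  \sum_(p <- cop h) \sum_(c <- cop' (S p.1)) G (c.1 * p.2) c.2 = Rs h G.
Proof.
move=> hG.
pose Phi := fun w s t => Rs w (fun x y => G (s * x) (t * y)).
transitivity (\sum_(p <- cop h) \sum_(c <- cop' (S p.1)) \sum_(q <- cop p.2)
   \sum_(a <- cop' q.1) Rs q.2 (fun u v => G (c.1 * (a.1 * u)) (c.2 * (a.2 * v)))).
  apply: eq_bigr => p _; apply: eq_bigr => c _.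
  have hGc : bilinear_form (fun u v => G (c.1 * u) (c.2 * v)).
    apply: bilP => z; [exact: (lin_G1 (g := fun u => c.1 * u)) (hlin_mull _)
                       | exact: (lin_G2 (g := fun u => c.2 * u)) (hlin_mull _)].
  by rewrite (lemI p.2 hGc) mulr1.
pose F := fun u v w => \sum_(c <- cop' (S u)) \sum_(a <- cop' v)
             Rs w (fun x y => G (c.1 * (a.1 * x)) (c.2 * (a.2 * y))).
have triF : trilinear_form F.
  apply: trilP.
  - move=> v w; apply: (lin_comp (f := fun u => \sum_(c <- cop' u) \sum_(a <- cop' v)
             Rs w (fun x y => G (c.1 * (a.1 * x)) (c.2 * (a.2 * y))))); last exact: SL.
    apply: (copL c'L (B := fun c1 c2 => \sum_(a <- cop' v)
             Rs w (fun x y => G (c1 * (a.1 * x)) (c2 * (a.2 * y))))).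
    apply: bilP => z; apply: lin_sumF => a; apply: lin_sumF => q; apply: lin_sumF => b.
      exact: (lin_G1 (g := fun s => s * (a.1 * (S q.1 * b.1)))) (hlin_mulr _).
    exact: (lin_G2 (g := fun s => s * (a.2 * S b.2))) (hlin_mulr _).
  - move=> u w; apply: lin_sumF => c.
    apply: (copL c'L (B := fun a1 a2 =>
             Rs w (fun x y => G (c.1 * (a1 * x)) (c.2 * (a2 * y))))).
    apply: bilP => z; apply: lin_sumF => q; apply: lin_sumF => b.
      exact: (lin_G1 (g := fun s => c.1 * (s * (S q.1 * b.1)))) (hlin_comp (hlin_mull _) (hlin_mulr _)).
    exact: (lin_G2 (g := fun s => c.2 * (s * S b.2))) (hlin_comp (hlin_mull _) (hlin_mulr _)).
  - move=> u v; apply: lin_sumF => c; apply: lin_sumF => a; apply: Rs_lin.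
    apply: bilP => z.
      exact: (lin_G1 (g := fun x => c.1 * (a.1 * x))) (hlin_comp (hlin_mull _) (hlin_mull _)).
    exact: (lin_G2 (g := fun x => c.2 * (a.2 * x))) (hlin_comp (hlin_mull _) (hlin_mull _)).
transitivity (\sum_(p <- cop h) \sum_(q <- cop p.2) F p.1 q.1 q.2).
  by apply: eq_bigr => p _; rewrite /F exchange_big.
rewrite -(coassocE h triF) /F.
transitivity (\sum_(p <- cop h) \sum_(r <- cop p.1)
    \sum_(d <- cop' (S r.1 * r.2)) Phi p.2 d.1 d.2).
  apply: eq_bigr => p _; apply: eq_bigr => r _.
  rewrite (c'ME _ _ (Rs_bil p.2 hG)); apply: eq_bigr => c _; apply: eq_bigr => a _.
  by apply: Rs_ext => x y; rewrite !mulrA.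
have linPhi : forall w, lin (fun y => \sum_(d <- cop' y) Phi w d.1 d.2).
  by move=> w; apply: (copL c'L); apply: Rs_bil.
transitivity (\sum_(p <- cop h) cou p.1 * Rs p.2 G).
  apply: eq_bigr => p _.
  rewrite -(lin_sum (f := fun y => \sum_(d <- cop' y) Phi p.2 d.1 d.2)) //.
  rewrite (SA p.1).1 (linZ (linPhi _)) (c'1E (Rs_bil _ hG)).
  by congr (_ * _); apply: Rs_ext => x y; rewrite !mul1r.
exact: (counit1 (f := fun y => Rs y G)) (Rs_lin hG).
Qed.

End Main.

Theorem lemma2p4 (k : fieldType) (H : algType k)
  (cop : H -> seq (H * H)) (cou : H -> k) (S : H -> H)
  (cop' : H -> seq (H * H)) (cou' : H -> k) (T : H -> H) :
  is_hopf_brace cop cou S cop' cou' T ->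
  forall h : H,
    teq2 [seq (a.1 * p.2, a.2) | p <- cop h, a <- cop' (S p.1)]
         [seq (S p.1 * b.1, S b.2) | p <- cop h, b <- cop' p.2].
Proof.
move=> hb h G hG; rewrite !big_allpairs_dep /=.
exact: (mainE hb h hG).
Qed.
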